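(* Consider a Levin–Wen string-net model built from a multiplicity-free fusion category with label set $\mathcal{F}$ in which every label is self-dual ($\bar a=a$) and which has an $S$-matrix $S$. Let $a\in\mathcal{F}$ with $a\neq 1$, let $e$ be an edge of the trivalent lattice, and let $p$ be either of the two plaquettes adjacent to $e$, with Levin–Wen plaquette operator $B_p$. Then for every $|\psi\rangle\in\mathcal{H}_{\mathrm{valid}}$ with $B_p|\psi\rangle=|\psi\rangle$, one has $B_p\big(O_a^{(e)}|\psi\rangle\big)=0$.
   Context: Each edge of a trivalent (e.g. honeycomb) lattice carries a qudit with orthonormal basis $\{|b\rangle\}_{b\in\mathcal{F}}$. The fusion category has fusion rules $\delta_{abc}\in\{0,1\}$, quantum dimensions $d_s>0$, total quantum dimension $D=\sqrt{\sum_j d_j^2}$, and unitary symmetric $S$-matrix. The vertex projector $A_v$ projects onto configurations where the three labels $(a,b,c)$ at vertex $v$ satisfy $\delta_{abc}=1$; $\mathcal{H}_{\mathrm{valid}}=\mathrm{span}\{|\psi\rangle: A_v|\psi\rangle=|\psi\rangle\ \forall v\}$. The plaquette operator is the standard Levin–Wen operator $B_p=\sum_{s\in\mathcal{F}}\frac{d_s}{D^2}B_p^s$, where $B_p^s$ (defined on $\mathcal{H}_{\mathrm{valid}}$ via the $F$-symbols) inserts a loop of type $s$ inside plaquette $p$ and fuses it into the boundary edges. The single-qudit operator $O_a^{(e)}$ acts on the qudit at edge $e$ by $O_a|b\rangle=\frac{S_{ab}}{S_{1b}}|b\rangle$ for all $b\in\mathcal{F}$, and as identity elsewhere. *)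

(* Defs.v *)
From HB Require Import structures.
From mathcomp Require Import all_boot all_order all_algebra.
Set Implicit Arguments. Unset Strict Implicit. Unset Printing Implicit Defensive.
Import Order.TTheory GRing.Theory Num.Theory.
Local Open Scope ring_scope.

(* Since every label is self-dual, duals are omitted everywhere.            *)
Record LWdata (C : numClosedFieldType) := LWData {
  lab : finType;
  lab1 : lab;
  N : lab -> lab -> lab -> bool;
  d : lab -> C;
  F : lab -> lab -> lab -> lab -> lab -> lab -> C;  (* F^{ijm}_{kln}       *)
  S : lab -> lab -> C;
  N_unit : forall a b, N lab1 a b = (a == b);
  N_sym12 : forall a b c, N a b c = N b a c;
  N_sym23 : forall a b c, N a b c = N a c b;
  N_assoc : forall a b c e,
    \sum_(x : lab) ((N a b x && N x c e) : nat)%:R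
      = \sum_(x : lab) ((N b c x && N a x e) : nat)%:R :> C;
  d_pos : forall s, 0 < d s;
  d_one : d lab1 = 1;
  d_fus : forall a b, d a * d b = \sum_(c : lab) (N a b c)%:R * d c;
  (* F-symbols (Levin-Wen conventions, eqs. for F with v_s = sqrt d_s),
     vanishing unless the four triangles {i,j,m},{k,l,m},{j,k,n},{i,l,n}
     are admissible *)
  F_adm : forall i j m k l n,
    ~~ [&& N i j m, N k l m, N j k n & N i l n] -> F i j m k l n = 0;
  F_norm : forall i j k,
    F i j k j i lab1 = (N i j k)%:R * sqrtC (d k) / (sqrtC (d i) * sqrtC (d j));
  F_tet1 : forall i j m k l n, F i j m k l n = F l k m j i n;
  F_tet2 : forall i j m k l n, F i j m k l n = F j i m l k n;
  F_tet3 : forall i j m k l n,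
    F i j m k l n = F i m j k n l * (sqrtC (d m) * sqrtC (d n))
                                  / (sqrtC (d j) * sqrtC (d l));
  F_pent : forall i j k l m p q r s,
    \sum_(n : lab) F m l q k p n * F j i p m n s * F j s n l k r
      = F j i p q k r * F r i q m l s;
  S_sym : forall a b, S a b = S b a;
  S_unitary : forall a b, \sum_(x : lab) S a x * (S b x)^* = (a == b)%:R;
  S_one : forall b, S lab1 b = d b / sqrtC (\sum_(j : lab) d j ^+ 2);
  S_verlinde : forall a b c,
    (N a b c)%:R = \sum_(x : lab) S a x * S b x * (S c x)^* / S lab1 x
}.


Arguments N {C} l0 _ _ _.
Arguments d {C} l0 _.
Arguments F {C} l0 _ _ _ _ _ _.
Arguments S {C} l0 _ _.

Definition totdim {C} (M : LWdata C) : C := sqrtC (\sum_(j : lab M) d M j ^+ 2).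

(* Trivalent lattice: a finite graph with vertices of degree 3, embedded    *)
(* via a rotation system: tl_inc v 0, tl_inc v 1, tl_inc v 2 are the three  *)
(* distinct edges at v, in the cyclic order given by the embedding.         *)
Record trivalent_lattice := TLat {
  tl_E : finType;
  tl_V : finType;
  tl_inc : tl_V -> 'I_3 -> tl_E;
  tl_inc_inj : forall v, injective (tl_inc v);
  tl_edge_ends : forall e, (#|[set v | e \in codom (tl_inc v)]| <= 2)%N
}.

(* A plaquette (face) of the embedded lattice: its boundary is the cyclic   *)
(* sequence of distinct edges pl_bnd 0, ..., pl_bnd (n-1); the vertex       *)
(* pl_vtx i joins pl_bnd i and pl_bnd (i+1 mod n), and pl_bnd (i+1) follows *)
(* pl_bnd i in the rotation at pl_vtx i (face tracing), the third edge at   *)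
(* that vertex being the external leg pl_leg i, which is not on the face.   *)
Record plaquette (Lat : trivalent_lattice) := Plaq {
  pl_n : nat;
  pl_bnd : 'I_pl_n -> tl_E Lat;
  pl_leg : 'I_pl_n -> tl_E Lat;
  pl_vtx : 'I_pl_n -> tl_V Lat;
  pl_bnd_inj : injective pl_bnd;
  pl_leg_out : forall i j, pl_leg i != pl_bnd j;
  pl_face : forall i, exists k : 'I_3,
    [/\ tl_inc (pl_vtx i) k = pl_bnd i,
        tl_inc (pl_vtx i) (ordS k) = pl_bnd (ordS i)
      & tl_inc (pl_vtx i) (ordS (ordS k)) = pl_leg i]
}.

Arguments pl_bnd {Lat} p _.
Arguments pl_leg {Lat} p _.
Arguments pl_vtx {Lat} p _.

Section Model.
Variables (C : numClosedFieldType) (M : LWdata C) (Lat : trivalent_lattice).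

Definition config := {ffun tl_E Lat -> lab M}.
Definition state := config -> C.

Definition Av (v : tl_V Lat) (psi : state) : state :=
  fun x => if N M (x (tl_inc v 0)) (x (tl_inc v 1)) (x (tl_inc v 2))
           then psi x else 0.

Definition valid (psi : state) : Prop := forall v, Av v psi = psi.

Definition on_bnd (p : plaquette Lat) (e : tl_E Lat) : bool :=
  [exists i, pl_bnd p i == e].

(* matrix element <y| B_p^s |x> (Levin-Wen formula; self-dual labels) *)
Definition Bs_coef (p : plaquette Lat) (s : lab M) (x y : config) : C :=
  if [forall e, ~~ on_bnd p e ==> (x e == y e)] then
    \prod_(i : 'I_(pl_n p))
      F M (x (pl_leg p i)) (x (pl_bnd p i)) (x (pl_bnd p (ordS i)))
          s (y (pl_bnd p (ordS i))) (y (pl_bnd p i))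
  else 0.

Definition Bps (p : plaquette Lat) (s : lab M) (psi : state) : state :=
  fun y => \sum_(x : config) Bs_coef p s x y * psi x.

Definition Bp (p : plaquette Lat) (psi : state) : state :=
  fun y => \sum_(s : lab M) d M s / totdim M ^+ 2 * Bps p s psi y.

Definition Oa (a : lab M) (e : tl_E Lat) (psi : state) : state :=
  fun x => S M a (x e) / S M (lab1 M) (x e) * psi x.

End Model.

(* Main.v *)
Require Import Defs.
From mathcomp Require Import all_boot all_order all_algebra.
From mathcomp Require Import ring zify.
From Stdlib Require Import FunctionalExtensionality.
Set Implicit Arguments. Unset Strict Implicit. Unset Printing Implicit Defensive.
Import Order.TTheory GRing.Theory Num.Theory.
Local Open Scope ring_scope.


Section FS.
Variables (C : numClosedFieldType) (M : LWdata C).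
Local Notation F := (F M).
Local Notation N := (N M).
Local Notation d := (d M).
Local Notation one := (lab1 M).
Local Notation v x := (sqrtC (d x)).

Lemma v_neq0 x : v x != 0.
Proof. by rewrite sqrtC_eq0 gt_eqF // d_pos. Qed.

Lemma v2 x : v x * v x = d x.
Proof. by rewrite -expr2 sqrtCK. Qed.

Lemma v1 : v one = 1.
Proof. by rewrite d_one sqrtC1. Qed.

Lemma d_neq0 x : d x != 0.
Proof. by rewrite gt_eqF // d_pos. Qed.

Lemma F0 i j m k l n :
  ~~ [&& N i j m, N k l m, N j k n & N i l n] -> F i j m k l n = 0.
Proof. exact: F_adm. Qed.

Lemma FNiln i j m k l n : F i j m k l n * (N i l n)%:R = F i j m k l n.
Proof.
case h: (N i l n); first by rewrite mulr1.
by rewrite F0 ?mul0r //; rewrite h !andbF.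
Qed.

Lemma FNklm i j m k l n : F i j m k l n * (N k l m)%:R = F i j m k l n.
Proof.
case h: (N k l m); first by rewrite mulr1.
by rewrite F0 ?mul0r //; rewrite h /= andbF.
Qed.

Lemma T12 i j m k l n : F i j m k l n = F l k m j i n.
Proof. exact: F_tet1. Qed.

Lemma F1 a b c : F a one a b c b = (N a b c)%:R.
Proof.
rewrite F_tet2 F_tet1.
have := F_tet3 b a c a b one.
rewrite F_norm v1 mulr1 => h.
have hv : v c / (v a * v b) != 0.
  by rewrite mulf_neq0 ?invr_eq0 ?mulf_neq0 ?v_neq0.
apply: (mulIf hv).
rewrite mulrA -h N_sym12 mulrA.
by rewrite [v b * v a]mulrC.
Qed.

Lemma Orth Mx L Q K J R :
  \sum_(n : lab M) F Mx L Q K J n * (N J Mx n)%:R * F J Mx n L K R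
  = (Q == R)%:R * (N J Q K)%:R * (N Q Mx L)%:R.
Proof.
transitivity (\sum_(n : lab M) F Mx L Q K J n * F J one J Mx n Mx * F J Mx n L K R).
  by apply: eq_bigr => n _; rewrite F1.
rewrite F_pent.
case: eqP => [<-|/eqP hQR].
  by rewrite !F1 mul1r.
rewrite mul0r mul0r F0 ?mul0r //.
rewrite N_unit (negbTE hQR). by rewrite !(andbF, andFb).
Qed.


Lemma Fvert l x x' s y' y t z' z :
  F l x x' s y' y * F l y y' t z' z
  = \sum_(u : lab M) F x z u t s y * F l x x' u z' z * F z' t y' s x' u.
Proof.
rewrite (F_tet2 l x x' s y' y) (F_tet2 l y y' t z' z) -F_pent.
apply: eq_bigr => u _; rewrite (F_tet2 l x x' u z' z); ring.
Qed.

Lemma T1T2 z t y s x u : F z t y s x u = F s x y z t u.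
Proof. by rewrite F_tet1 F_tet2. Qed.

Lemma Horth Z t s X u u' :
  \sum_(y : lab M) F Z t y s X u * F X Z u' t s y
  = (u' == u)%:R * (N s u' t)%:R * (N u' X Z)%:R.
Proof.
rewrite -Orth; apply: eq_bigr => y _.
rewrite (T1T2 Z t y s X u) -[F X Z u' t s y in LHS]FNiln (N_sym12 X s y); ring.
Qed.

Lemma algA (ds du dy dz vs vu vy vz vx vt A B : C) :
  vs * vs = ds -> vu * vu = du -> vy * vy = dy -> vz * vz = dz ->
  vs != 0 -> vz != 0 -> vx != 0 -> vt != 0 ->
  ds * (A * (vu * vy) / (vz * vs) * (B * (vx * vt) / (vs * vz) * (vy * vu) / (vx * vt)))
  = du * dy / dz * (A * B).
Proof.
move=> <- <- <- <- hs hz hx ht; field.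
by rewrite hs hz hx ht.
Qed.

Lemma sum_s x z u t y :
  \sum_(s : lab M) d s * (F x z u t s y * F s x y z t u)
  = d u * d y / d z * ((N y z t)%:R * (N z x u)%:R).
Proof.
have e1 s : d s * (F x z u t s y * F s x y z t u)
     = d u * d y / d z * (F x u z t y s * (N y x s)%:R * F y x s u t z).
  rewrite (N_sym12 y x s) FNiln (F_tet3 x z u t s y) (F_tet3 s x y z t u).
  rewrite (F_tet2 s y x z u t) (F_tet3 y s x u z t).
  by rewrite (@algA _ (d u) (d y) (d z)) ?v2 ?v_neq0.
rewrite (eq_bigr _ (fun s _ => e1 s)) -big_distrr /= Orth eqxx mul1r.
by [].
Qed.

Lemma sum_st Z X u y :
  \sum_(s : lab M) \sum_(t : lab M) d s * d t * (F Z t y s X u * F X Z u t s y)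
  = d u * (d y * d y) * (N Z X u)%:R.
Proof.
rewrite exchange_big /=.
transitivity (\sum_(t : lab M) d t * (\sum_(s : lab M) d s * (F X Z u t s y * F s X y Z t u))).
  apply: eq_bigr => t _; rewrite big_distrr /=; apply: eq_bigr => s _.
  by rewrite T1T2; ring.
under eq_bigr => t _ do rewrite sum_s.
transitivity (d u * d y / d Z * (N Z X u)%:R * \sum_(t : lab M) (N y Z t)%:R * d t).
  rewrite big_distrr /=; apply: eq_bigr => t _; ring.
rewrite -d_fus N_sym12.
have hZ := d_neq0 Z; field; exact: hZ.
Qed.

End FS.


Section NatL.
Local Open Scope nat_scope.
Lemma modn_lt2 a n : a < n + n -> a %% n = if a < n then a else a - n.
Proof.
move=> h; case: ltnP => h2; first by rewrite modn_small.
have e : a = (a - n) + n by rewrite subnK.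
by rewrite {1}e modnDr modn_small //; lia.
Qed.

Lemma iter_ordS n (j : 'I_n) m : val (iter m (@ordS n) j) = (j + m) %% n.
Proof.
elim: m => [|m IH] /=; first by rewrite addn0 modn_small.
by rewrite IH -[((j + m) %% n).+1]addn1 modnDml addn1 addnS.
Qed.

Lemma cycle_const (T : Type) n (j : 'I_n) (u : 'I_n -> T) :
  (forall k, k != j -> u (ord_pred k) = u k) -> forall k, u k = u j.
Proof.
move=> H.
have step m : m < n -> u (iter m (@ordS n) j) = u j.
  elim: m => [|m IH] // hm /=.
  rewrite -IH ?(ltnW hm) //.
  rewrite -[in RHS](ordSK (iter m (@ordS n) j)) H //.
  apply/eqP => /(congr1 val); rewrite /= -[_.+1 %% n]/(val (ordS _)).
  rewrite -/(iter m.+1 _ _) iter_ordS modn_lt2; last by have := ltn_ord j; lia.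
  by case: ltnP => ? ; lia.
move=> k.
have hk := ltn_ord k; have hj := ltn_ord j.
have [m hm hmk] : exists2 m, m < n & (j + m) %% n = k.
  case: (leqP j k) => h.
    by exists (k - j); [lia | rewrite modn_small; lia].
  exists (k + n - j); first lia.
  by rewrite modn_lt2; [case: ltnP => ?; lia | lia].
rewrite -(step m hm); congr u; apply: val_inj.
by rewrite iter_ordS hmk.
Qed.
End NatL.

Section Core.
Variables (C : numClosedFieldType) (M : LWdata C).
Local Notation F := (F M).
Local Notation N := (N M).
Local Notation d := (d M).
Local Notation L := (lab M).

Definition Hk n (X Z : 'I_n -> L) (w : 'I_n -> L -> C) s t (k : 'I_n) (a b : L) : C :=
  \sum_(y : L) w k y * F (Z k) t y s (X k) a * F (X k) (Z k) b t s y.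

Lemma core n (l X Z : 'I_n -> L) (w : 'I_n -> L -> C) s t :
  \sum_(f : {ffun 'I_n -> L})
     (\prod_i w i (f i)) *
     ((\prod_i F (l i) (X i) (X (ordS i)) s (f (ordS i)) (f i)) *
      (\prod_i F (l i) (f i) (f (ordS i)) t (Z (ordS i)) (Z i)))
  = \sum_(u : {ffun 'I_n -> L})
     (\prod_i F (l i) (X i) (X (ordS i)) (u i) (Z (ordS i)) (Z i)) *
     \prod_k Hk X Z w s t k (u (ord_pred k)) (u k).
Proof.
transitivity (\sum_(f : {ffun 'I_n -> L}) \sum_(u : {ffun 'I_n -> L})
   (\prod_i w i (f i)) * \prod_i (F (X i) (Z i) (u i) t s (f i)
         * F (l i) (X i) (X (ordS i)) (u i) (Z (ordS i)) (Z i)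
         * F (Z (ordS i)) t (f (ordS i)) s (X (ordS i)) (u i))).
  apply: eq_bigr => f _; rewrite -big_distrr /= -big_split /=.
  congr (_ * _).
  rewrite (eq_bigr _ (fun i _ => Fvert (l i) (X i) (X (ordS i)) s (f (ordS i)) (f i) t (Z (ordS i)) (Z i))).
  by rewrite bigA_distr_bigA.
rewrite exchange_big /=; apply: eq_bigr => u _.
transitivity (\sum_(f : {ffun 'I_n -> L})
   (\prod_i F (l i) (X i) (X (ordS i)) (u i) (Z (ordS i)) (Z i)) *
   \prod_k (w k (f k) * F (Z k) t (f k) s (X k) (u (ord_pred k))
            * F (X k) (Z k) (u k) t s (f k))).
  apply: eq_bigr => f _.
  rewrite !big_split /=.
  rewrite [X in _ = _ * (_ * X * _)](reindex_inj (@ordS_inj n)) /=.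
  under [X in _ = _ * (_ * X * _)]eq_bigr => i _ do rewrite ordSK.
  ring.
rewrite -big_distrr /=; congr (_ * _).
by rewrite /Hk bigA_distr_bigA.
Qed.


Lemma collapse n (X Z : 'I_n -> L) (j : 'I_n) (g : L -> C) (u : {ffun 'I_n -> L}) :
  \sum_(y : L) g y * (d y * d y) = 0 ->
  \sum_(s : L) \sum_(t : L) d s * d t *
     \prod_k Hk X Z (fun k y => if k == j then g y else 1) s t k (u (ord_pred k)) (u k)
  = 0.
Proof.
move=> hg.
set w := fun k y => if k == j then g y else 1.
have Hne s t k a b : k != j ->
    Hk X Z w s t k a b = (b == a)%:R * (N s b t)%:R * (N b (X k) (Z k))%:R.
  move=> hk; rewrite /Hk /w (negbTE hk) -Horth.
  by apply: eq_bigr => y _; rewrite mul1r.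
case: (boolP [forall k, (k != j) ==> (u (ord_pred k) == u k)]) => hall; last first.
  rewrite negb_forall in hall; case/existsP: hall => k; rewrite negb_imply => /andP [hkj hu].
  apply: big1 => s _; apply: big1 => t _.
  rewrite (bigD1 k) //= Hne // eq_sym (negbTE hu).
  by rewrite !mul0r mulr0.
have hc : forall k, u k = u j.
  apply: cycle_const => k hk.
  by move/forallP: hall => /(_ k); rewrite hk /= => /eqP.
set u0 := u j.
pose P : C := \prod_(k | k != j) (N u0 (X k) (Z k))%:R.
have e1 s t : d s * d t * \prod_k Hk X Z w s t k (u (ord_pred k)) (u k)
   = \sum_(y : L) P * g y * (d s * d t * (F (Z j) t y s (X j) u0 * F (X j) (Z j) u0 t s y)).
  rewrite (bigD1 j) //= !hc -/u0.
  transitivity (d s * d t * (Hk X Z w s t j u0 u0 * P)).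
    case hN: (N s u0 t).
      congr (_ * (_ * _)).
      rewrite /P; apply: eq_bigr => k hk; rewrite !hc Hne // eqxx hN.
      by rewrite !mul1r.
    have -> : Hk X Z w s t j u0 u0 = 0.
      apply: big1 => y _.
      rewrite -(FNklm (X j) (Z j) u0 t s y) (N_sym12 t s u0) (N_sym23 s t u0) hN.
      by rewrite !mulr0.
    by rewrite !mul0r !mulr0.
  rewrite /Hk /w eqxx big_distrl big_distrr /=.
  apply: eq_bigr => y _; ring.
rewrite (eq_bigr _ (fun s _ => eq_bigr _ (fun t _ => e1 s t))).
rewrite (eq_bigr _ (fun s _ => exchange_big _ _ _ _ _ _)) /= exchange_big /=.
transitivity (\sum_(y : L) P * g y * (d u0 * (d y * d y) * (N (Z j) (X j) u0)%:R)).
  apply: eq_bigr => y _.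
  rewrite -sum_st big_distrr /=; apply: eq_bigr => s _.
  by rewrite big_distrr.
transitivity (P * d u0 * (N (Z j) (X j) u0)%:R * \sum_(y : L) g y * (d y * d y)).
  rewrite big_distrr /=; apply: eq_bigr => y _; ring.
by rewrite hg mulr0.
Qed.

End Core.


Section Model.
Variables (C : numClosedFieldType) (M : LWdata C) (Lat : trivalent_lattice)
  (p : plaquette Lat).
Local Notation L := (lab M).
Local Notation cfg := (config M Lat).
Local Notation n := (pl_n p).

Definition off (x y : cfg) := [forall e, ~~ on_bnd p e ==> (x e == y e)].

Definition upd (x : cfg) (f : {ffun 'I_n -> L}) : cfg :=
  [ffun e => if [pick i | pl_bnd p i == e] is Some i then f i else x e].

Definition restr (y : cfg) : {ffun 'I_n -> L} := [ffun i => y (pl_bnd p i)].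

Lemma upd_bnd x f i : upd x f (pl_bnd p i) = f i.
Proof.
rewrite ffunE; case: pickP => [i' /eqP h|h]; last by have := h i; rewrite eqxx.
by rewrite (pl_bnd_inj h).
Qed.

Lemma upd_off x f e : ~~ on_bnd p e -> upd x f e = x e.
Proof.
move=> he; rewrite ffunE; case: pickP => [i' hi|//].
by move: he; rewrite /on_bnd; case/existsP; exists i'.
Qed.

Lemma leg_off i : ~~ on_bnd p (pl_leg p i).
Proof.
apply/existsP => -[k /eqP hk].
by have := pl_leg_out i k; rewrite hk eqxx.
Qed.

Lemma off_upd x f : off x (upd x f).
Proof. by apply/forallP => e; apply/implyP => he; rewrite upd_off. Qed.

Lemma restr_upd x f : restr (upd x f) = f.
Proof. by apply/ffunP => i; rewrite ffunE upd_bnd. Qed.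

Lemma upd_restr x y : off x y -> upd x (restr y) = y.
Proof.
move=> hxy; apply/ffunP => e.
case he: (on_bnd p e).
  case/existsP: he => i /eqP <-.
  by rewrite upd_bnd ffunE.
rewrite upd_off ?he //.
by move/forallP: hxy => /(_ e); rewrite he /= => /eqP.
Qed.

Lemma reindex_off x (G : cfg -> C) :
  \sum_(y : cfg) (if off x y then G y else 0) = \sum_(f : {ffun 'I_n -> L}) G (upd x f).
Proof.
rewrite -big_mkcond (reindex_onto (upd x) restr) /=; last exact: upd_restr.
by apply: eq_bigl => f; rewrite off_upd restr_upd eqxx.
Qed.

Lemma off_trans x y z : off x y -> off y z = off x z.
Proof.
move=> /forallP hxy; apply/forallP/forallP => h e; have := h e; have := hxy e;
  by case: (on_bnd p e) => //= /eqP ->.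
Qed.


Lemma Bs_coefE s x y : Bs_coef p s x y =
  if off x y then \prod_(i : 'I_n)
      F M (x (pl_leg p i)) (x (pl_bnd p i)) (x (pl_bnd p (ordS i)))
          s (y (pl_bnd p (ordS i))) (y (pl_bnd p i))
  else 0.
Proof. by []. Qed.

Lemma Wzero (e : tl_E Lat) (j : 'I_n) (he : pl_bnd p j = e) (g : L -> C)
  (hg : \sum_(y : L) g y * (d M y * d M y) = 0) (x z : cfg) :
  \sum_(s : L) \sum_(t : L) d M s * d M t *
     (\sum_(y : cfg) Bs_coef p s x y * (g (y e) * Bs_coef p t y z)) = 0.
Proof.
case hxz: (off x z); last first.
  apply: big1 => s _; apply: big1 => t _; rewrite big1 ?mulr0 // => y _.
  rewrite !Bs_coefE; case hxy: (off x y); last by rewrite mul0r.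
  by rewrite (off_trans z hxy) hxz !mulr0.
pose l i := x (pl_leg p i); pose X i := x (pl_bnd p i); pose Z i := z (pl_bnd p i).
pose w := fun (k : 'I_n) y => if k == j then g y else 1.
have inner s t : \sum_(y : cfg) Bs_coef p s x y * (g (y e) * Bs_coef p t y z)
   = \sum_(f : {ffun 'I_n -> L})
     (\prod_i w i (f i)) *
     ((\prod_i F M (l i) (X i) (X (ordS i)) s (f (ordS i)) (f i)) *
      (\prod_i F M (l i) (f i) (f (ordS i)) t (Z (ordS i)) (Z i))).
  transitivity (\sum_(y : cfg) if off x y then (fun y : cfg => \prod_(i : 'I_n)
      F M (x (pl_leg p i)) (x (pl_bnd p i)) (x (pl_bnd p (ordS i)))
          s (y (pl_bnd p (ordS i))) (y (pl_bnd p i)) * (g (y e) * \prod_(i : 'I_n)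
      F M (y (pl_leg p i)) (y (pl_bnd p i)) (y (pl_bnd p (ordS i)))
          t (z (pl_bnd p (ordS i))) (z (pl_bnd p i)))) y else 0).
    apply: eq_bigr => y _; rewrite !Bs_coefE.
    case hxy: (off x y); last by rewrite mul0r.
    by rewrite (off_trans z hxy) hxz.
  rewrite reindex_off; apply: eq_bigr => f _.
  have hw : \prod_i w i (f i) = g (f j).
    rewrite (bigD1 j) //= big1 ?mulr1 ?/w ?eqxx // => i /negbTE hi.
    by rewrite /w hi.
  rewrite hw /= -he upd_bnd.
  under [in RHS]eq_bigr => i _ do rewrite /l /X.
  rewrite mulrCA; congr (_ * (_ * _)).
    by apply: eq_bigr => i _; rewrite !upd_bnd.
  by apply: eq_bigr => i _; rewrite !upd_bnd upd_off // leg_off.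
under eq_bigr => s _ do under eq_bigr => t _ do rewrite inner core big_distrr /=.
rewrite (eq_bigr _ (fun s _ => exchange_big _ _ _ _ _ _)) /= exchange_big /=.
apply: big1 => u _.
under eq_bigr => s _ do under eq_bigr => t _ do rewrite mulrCA.
under eq_bigr => s _ do rewrite -big_distrr /=.
rewrite -big_distrr /= collapse ?mulr0 //.
Qed.

End Model.


Lemma sumd2_gt0 (C : numClosedFieldType) (M : LWdata C) :
  0 < \sum_(j : lab M) d M j ^+ 2.
Proof.
rewrite (bigD1 (lab1 M)) //= d_one expr1n.
apply: (lt_le_trans ltr01); rewrite lerDl.
by apply: sumr_ge0 => i _; rewrite exprn_ge0 // ltW // d_pos.
Qed.

Lemma hgS (C : numClosedFieldType) (M : LWdata C) (a : lab M) : a != lab1 M ->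
  \sum_(y : lab M) S M a y / S M (lab1 M) y * (d M y * d M y) = 0.
Proof.
move=> ha.
set D := sqrtC (\sum_(j : lab M) d M j ^+ 2).
have hD : D != 0 by rewrite sqrtC_eq0 gt_eqF // sumd2_gt0.
have hD0 : 0 <= D by rewrite sqrtC_ge0 ltW // sumd2_gt0.
have hc y : (S M (lab1 M) y)^* = S M (lab1 M) y.
  apply: conj_Creal; apply: ger0_real.
  by rewrite S_one divr_ge0 // ltW // d_pos.
transitivity (D * D * \sum_(y : lab M) S M a y * (S M (lab1 M) y)^*).
  rewrite big_distrr /=; apply: eq_bigr => y _.
  rewrite hc S_one -/D.
  have hy := d_neq0 y; field.
  by rewrite hy hD.
by rewrite S_unitary (negbTE ha) mulr0.
Qed.

Lemma reorder4 (C : numClosedFieldType) (A B : finType) (E : A -> B -> A -> B -> C) :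
  \sum_(t : A) \sum_(y : B) \sum_(s : A) \sum_(x : B) E t y s x
  = \sum_(x : B) \sum_(s : A) \sum_(t : A) \sum_(y : B) E t y s x.
Proof.
under eq_bigr => t _ do under eq_bigr => y _ do rewrite exchange_big.
under eq_bigr => t _ do rewrite exchange_big.
rewrite exchange_big.
under eq_bigr => x _ do under eq_bigr => t _ do rewrite exchange_big.
by under eq_bigr => x _ do rewrite exchange_big.
Qed.

Unset Implicit Arguments.

Theorem lemma11 (C : numClosedFieldType) (M : LWdata C) (Lat : trivalent_lattice)
  (p : plaquette Lat) (e : tl_E Lat) (a : lab M)
  (ha : a != lab1 M) (he : on_bnd p e)
  (psi : state M Lat) :
  valid psi -> Bp p psi = psi -> Bp p (Oa a e psi) = (fun _ => 0).
Proof.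
move=> _ hB; apply: functional_extensionality => z.
case/existsP: he => j /eqP hj.
rewrite -hB /Bp /Bps /Oa /=.
set D2 := totdim M ^+ 2.
set g := fun b => S M a b / S M (lab1 M) b.
transitivity (\sum_(x : config M Lat) psi x / (D2 * D2) *
   (\sum_(s : lab M) \sum_(t : lab M) d M s * d M t *
     (\sum_(y : config M Lat) Bs_coef p s x y * (g (y e) * Bs_coef p t y z)))).
  rewrite /g.
  transitivity (\sum_(t : lab M) \sum_(y : config M Lat) \sum_(s : lab M) \sum_(x : config M Lat)
     (d M t / D2 * (Bs_coef p t y z * (S M a (y e) / S M (lab1 M) (y e) *
        (d M s / D2 * (Bs_coef p s x y * psi x)))))).
    apply: eq_bigr => t _; rewrite big_distrr; apply: eq_bigr => y _ /=.
    rewrite !big_distrr /=; apply: eq_bigr => s _.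
    by rewrite !big_distrr.
  rewrite reorder4; apply: eq_bigr => x _.
  rewrite big_distrr; apply: eq_bigr => s _ /=.
  rewrite big_distrr; apply: eq_bigr => t _ /=.
  rewrite !big_distrr; apply: eq_bigr => y _ /=.
  rewrite /D2; have hD := sqrtC_eq0 (\sum_(j : lab M) d M j ^+ 2).
  have hD' : totdim M != 0 by rewrite /totdim sqrtC_eq0 gt_eqF // sumd2_gt0.
  have hS : S M (lab1 M) (y e) != 0.
    by rewrite S_one mulf_neq0 // ?invr_eq0 ?d_neq0 // sqrtC_eq0 gt_eqF // sumd2_gt0.
  by field; rewrite hS hD'.
by apply: big1 => x _; rewrite (Wzero hj) ?mulr0 // hgS.
Qed.
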